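(* Let $M=(\mathbf{K}^{\mathbf{n}},\rho)$ be a sum-matroid with nullity function $\eta(\mathcal{L})=\mathrm{Rk}(\mathcal{L})-\rho(\mathcal{L})$. Then for every $i\in\{1,\dots,\eta(\mathbf{K}^{\mathbf{n}})\}$, $$\min\{\mathrm{Rk}(\mathcal{L}):\mathcal{L}\in\mathcal{P}(\mathbf{K}^{\mathbf{n}}),\ \eta(\mathcal{L})=i\}=\min\{\mathrm{Rk}(\mathcal{L}):\mathcal{L}\in\mathcal{P}(\mathbf{K}^{\mathbf{n}}),\ \eta(\mathcal{L})\ge i\}.$$
   Context: $\ell,n_1,\dots,n_\ell$ positive integers, $K_1,\dots,K_\ell$ finite fields. $\mathcal{P}(\mathbf{K}^{\mathbf{n}})=\mathcal{P}(K_1^{n_1})\times\cdots\times\mathcal{P}(K_\ell^{n_\ell})$, $\mathcal{P}(K_i^{n_i})$ the lattice of $K_i$-subspaces of $K_i^{n_i}$, with componentwise inclusion, sum $+$ and intersection $\cap$; $\mathrm{Rk}(\mathcal{L})=\sum_i\dim_{K_i}\mathcal{L}_i$; $\mathbf{K}^{\mathbf{n}}=(K_1^{n_1},\dots,K_\ell^{n_\ell})$. A sum-matroid is a pair $(\mathbf{K}^{\mathbf{n}},\rho)$ with $\rho:\mathcal{P}(\mathbf{K}^{\mathbf{n}})\to\mathbb{Z}_{\ge0}$ satisfying for all $\mathcal{L},\mathcal{L}'$: (R1) $0\le\rho(\mathcal{L})\le\mathrm{Rk}(\mathcal{L})$; (R2) $\mathcal{L}\subseteq\mathcal{L}'\Rightarrow\rho(\mathcal{L})\le\rho(\mathcal{L}')$;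 (R3) $\rho(\mathcal{L}+\mathcal{L}')+\rho(\mathcal{L}\cap\mathcal{L}')\le\rho(\mathcal{L})+\rho(\mathcal{L}')$. *)

(* Defs.v *)
From HB Require Import structures.
From mathcomp Require Import all_boot all_order all_algebra all_field.
Set Implicit Arguments. Unset Strict Implicit. Unset Printing Implicit Defensive.
Import GRing.Theory.
Local Open Scope ring_scope.

(* The lattice P(K^n) = P(K_1^{n_1}) x ... x P(K_l^{n_l}),
   indexed by i : 'I_l, with K i a finite field and n i a dimension. *)
Definition SumSp (l : nat) (K : 'I_l -> finFieldType) (n : 'I_l -> nat) :=
  forall i : 'I_l, {vspace 'rV[K i]_(n i)}.

Section SumSpOps.
Variables (l : nat) (K : 'I_l -> finFieldType) (n : 'I_l -> nat).

Definition sfull : SumSp K n := fun i => fullv.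
Definition ssub (L L' : SumSp K n) : Prop := forall i, (L i <= L' i)%VS.
Definition sadd (L L' : SumSp K n) : SumSp K n := fun i => (L i + L' i)%VS.
Definition scap (L L' : SumSp K n) : SumSp K n := fun i => (L i :&: L' i)%VS.
Definition Rk (L : SumSp K n) : nat := (\sum_(i < l) \dim (L i))%N.

Definition is_sum_matroid (rho : SumSp K n -> nat) : Prop :=
  [/\ forall L, (0 <= rho L <= Rk L)%N,
      forall L L', ssub L L' -> (rho L <= rho L')%N
    & forall L L', (rho (sadd L L') + rho (scap L L') <= rho L + rho L')%N].

(* nullity eta(L) = Rk(L) - rho(L) (exact subtraction by (R1)) *)
Definition nullity (rho : SumSp K n -> nat) (L : SumSp K n) : nat :=
  (Rk L - rho L)%N.
End SumSpOps.

Definition is_min (P : nat -> Prop) (m : nat) : Prop :=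
  P m /\ forall k, P k -> (m <= k)%N.

(* Main.v *)
Require Import Defs.
From HB Require Import structures.
From mathcomp Require Import all_boot all_order all_algebra all_field.
From mathcomp Require Import zify.
From Stdlib Require Import ClassicalEpsilon.

Section Hyp.
Variables (F : fieldType) (vT : vectType F).
Definition hyp (U : {vspace vT}) : {vspace vT} := <<behead (vbasis U)>>%VS.

Lemma hyp_sub U : (hyp U <= U)%VS.
Proof.
rewrite -{2}(span_basis (vbasisP U)); apply: sub_span.
case: (tval (vbasis U)) => //= x s y ys; by rewrite inE ys orbT.
Qed.

Lemma hyp_dim U : \dim (hyp U) = (\dim U).-1.
Proof.
have := basis_free (vbasisP U).
rewrite /hyp -[in RHS](size_tuple (vbasis U)).
case: (tval (vbasis U)) => [|x s] //=; first by rewrite span_nil dimv0.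
by rewrite free_cons => /andP[_ /eqP].
Qed.
End Hyp.
Arguments hyp {F vT}. Arguments hyp_sub {F vT}. Arguments hyp_dim {F vT}.

Theorem mainTheorem7 (l : nat) (K : 'I_l -> finFieldType) (n : 'I_l -> nat)
  (hl : (0 < l)%N) (hn : forall j, (0 < n j)%N)
  (rho : SumSp K n -> nat) (hM : is_sum_matroid rho) (i : nat)
  (hi1 : (1 <= i)%N) (hi2 : (i <= nullity rho (sfull K n))%N) :
  exists m : nat,
    is_min (fun r => exists L : SumSp K n, nullity rho L = i /\ Rk L = r) m /\
    is_min (fun r => exists L : SumSp K n, (i <= nullity rho L)%N /\ Rk L = r) m.
Proof.
case: hM => hR1 hR2 _.
pose P r := exists L : SumSp K n, (i <= nullity rho L)%N /\ Rk L = r.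
pose pb r := if excluded_middle_informative (P r) then true else false.
have pbP r : reflect (P r) (pb r).
  by rewrite /pb; case: excluded_middle_informative => h; constructor.
have exP : exists r, pb r by exists (Rk (sfull K n)); apply/pbP; exists (sfull K n).
case: (ex_minnP exP) => m /pbP [L0 [hL0 hRk]] hmin.
have minP k : P k -> (m <= k)%N by move=> /pbP; apply: hmin.
have eqL0 : nullity rho L0 = i.
  apply/eqP; rewrite eqn_leq hL0 andbT leqNgt; apply/negP => hgt.
  have := hR1 L0; rewrite /nullity in hL0 hgt * => /andP[_ hr].
  have hpos : (0 < Rk L0)%N by lia.
  have [j hj] : exists j, (0 < \dim (L0 j))%N.
    apply/existsP; move: hpos; apply: contraLR; rewrite negb_exists => /forallP h.
    rewrite -leqNgt leqn0 /Rk sum_nat_eq0; apply/forallP => k /=.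
    by have := h k; rewrite lt0n negbK.
  pose L' : SumSp K n := fun k => if k == j then hyp (L0 k) else L0 k.
  have hsub : ssub L' L0 by move=> k; rewrite /L'; case: (k == j) => //; apply: hyp_sub.
  have hRk' : Rk L' = (Rk L0).-1.
    rewrite /Rk (bigD1 j) //= [X in _ = X.-1](bigD1 j) //= /L' eqxx hyp_dim.
    rewrite (eq_bigr (fun k => \dim (L0 k))); last by move=> k /negbTE ->.
    by case: (\dim (L0 j)) hj.
  have := hR2 _ _ hsub; have := hR1 L'.
  move=> /andP[_ h1] h2.
  have hP : P (Rk L') by exists L'; split => //; rewrite /nullity; lia.
  have := minP _ hP; rewrite hRk'; lia.
exists m; split; split.
- by exists L0.
- by move=> k [L [h1 h2]]; apply: minP; exists L; rewrite h1.
- by exists L0.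
- by move=> k hk; apply: minP.
Qed.
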